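(* Let $k\ge0$, let $\eta$ be an $\mathbb S^{2^k}$-invariant Borel probability measure on $I^{\mathbb Z}$, and suppose $D_k[\eta]$ is ergodic with respect to $\mathbb S\times\mathbb O$. Then for every $n>k$, the number $\varrho_n=e^{2\pi i/2^n}$ is not an eigenvalue of $\mathbb S$ (of the operator $f\mapsto f\circ\mathbb S$) on $L^2(I^{\mathbb Z},\theta_0[D_k[\eta]])$.
   Context: $I=\{0,1\}$. $\mathbb S$ is the left shift on $I^{\mathbb Z}$; $\mathbb S^j\eta$ denotes pushforward. $I^{\mathbb N}$ is the space of $0$–$1$ sequences $(\alpha_i)_{i\ge1}$ with uniform Bernoulli measure $m$; $\mathbb O$ is the odometer (if $\alpha_1=\dots=\alpha_{n-1}=1$, $\alpha_n=0$, then $\mathbb O[\alpha]_i=0$ for $i<n$, $\mathbb O[\alpha]_n=1$, $\mathbb O[\alpha]_i=\alpha_i$ for $i>n$). $A_{r,k}=\{\alpha:\sum_{i=1}^k\alpha_i2^{i-1}=r\}$. $D_k[\eta]=\sum_{i=0}^{2^k-1}\mathbb S^i\eta\times(\chi_{A_{i,k}}m)$. $\theta_0[\nu]$ denotes the projection of a measure $\nu$ on $I^{\mathbb Z}\times I^{\mathbb N}$ to $I^{\mathbb Z}$; thus $\theta_0[D_k[\eta]]=2^{-k}\sum_{i=0}^{2^k-1}\mathbb S^i\eta$. *)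

(* Defs.v *)
From HB Require Import structures.
From mathcomp Require Import all_boot all_order all_algebra.
From mathcomp Require Import all_classical all_reals all_analysis.

Set Implicit Arguments.
Unset Strict Implicit.
Unset Printing Implicit Defensive.
Import Order.TTheory GRing.Theory Num.Theory.
Local Open Scope classical_set_scope.
Local Open Scope ring_scope.

(* Cylinder generators of the product sigma-algebra on I^Z
   (= Borel sigma-algebra of the product topology). *)
Definition cylZ : set (set (int -> bool)) :=
  [set A | exists (i : int) (b : bool), A = [set x | x i = b]].
Definition IZ := g_sigma_algebraType cylZ.

(* I^N: sequences (alpha_i)_{i>=1}; we index them from 0, so that
   a i stands for alpha_{i+1}. *)
Definition cylN : set (set (nat -> bool)) :=
  [set A | exists (i : nat) (b : bool), A = [set x | x i = b]].
Definition IN := g_sigma_algebraType cylN.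

Definition bshift (x : IZ) : IZ := fun i => x (i + 1).

(* odometer O ("add one with carry"):
   coordinate i flips iff all previous coordinates are 1.
   For alpha_1 = .. = alpha_{n-1} = 1, alpha_n = 0 this gives exactly
   O[alpha]_i = 0 (i<n), O[alpha]_n = 1, O[alpha]_i = alpha_i (i>n);
   the (null) all-ones sequence is sent to the all-zeros sequence. *)
Definition odometer (a : IN) : IN :=
  fun i => if [forall j : 'I_i, a j] then ~~ a i else a i.

Definition A_set (r k : nat) : set IN :=
  [set a : IN | (\sum_(i < k) (a i : nat) * 2 ^ i)%N = r].

Definition is_uniform_bernoulli (R : realType) (m : set IN -> \bar R) :=
  forall (n : nat) (s : 'I_n -> bool),
    m [set a : IN | forall i : 'I_n, a i = s i] = ((2 ^- n)%:E)%E.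

Definition shift_push (R : realType) (eta : set IZ -> \bar R) (j : nat) :
  set IZ -> \bar R := pushforward eta (iter j bshift).

Definition restr_measure (R : realType) (m : set IN -> \bar R) (A : set IN) :
  set IN -> \bar R := fun X => m (X `&` A).

Definition D_meas (R : realType) (m : set IN -> \bar R) (k : nat)
  (eta : set IZ -> \bar R) : set (IZ * IN) -> \bar R :=
  fun E => (\sum_(i < 2 ^ k)
     ((shift_push eta i) \x (restr_measure m (A_set i k))) E)%E.

Definition theta0 (R : realType) (nu : set (IZ * IN) -> \bar R) :
  set IZ -> \bar R := pushforward nu fst.

Definition SxO (p : IZ * IN) : IZ * IN := (bshift p.1, odometer p.2).

Definition ergodic d (X : measurableType d) (R : realType)
  (nu : set X -> \bar R) (T : X -> X) : Prop :=
  (forall E, measurable E -> nu (T @^-1` E) = nu E) /\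
  (forall E, measurable E -> T @^-1` E = E -> nu E = 0%E \/ nu (~` E) = 0%E).

(* c is an eigenvalue, c = cr + i ci, of the Koopman operator f |-> f o T
   on the complex space L^2(X, mu); a complex function f is represented by
   its real and imaginary parts (u, v). *)
Definition L2_eigenvalue d (X : measurableType d) (R : realType)
  (mu : set X -> \bar R) (T : X -> X) (cr ci : R) : Prop :=
  exists u v : X -> R,
    [/\ measurable_fun setT u, measurable_fun setT v,
        (\int[mu]_x ((u x) ^+ 2 + (v x) ^+ 2)%:E < +oo)%E,
        ~ {ae mu, forall x, u x = 0 /\ v x = 0} &
        {ae mu, forall x, u (T x) = cr * u x - ci * v x /\
                          v (T x) = ci * u x + cr * v x}].

(* Main.v *)
Require Import Defs.
From HB Require Import structures.
From mathcomp Require Import all_boot all_order all_algebra.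
From mathcomp Require Import all_classical all_reals all_analysis.
From mathcomp Require Import ring lra.
Import Order.TTheory GRing.Theory Num.Theory.
Local Open Scope classical_set_scope.
Local Open Scope ring_scope.

Definition shZ (j : int) (x : IZ) : IZ := fun i => x (i + j).

Lemma measurable_shZ j : measurable_fun setT (shZ j).
Proof.
apply: (@measurability _ _ _ _ setT (shZ j) cylZ) => //.
move=> _ [A [i [b ->]] <-]; rewrite setTI.
apply: sub_sigma_algebra; exists (i + j), b => //.
Qed.

Lemma measurable_bshift : measurable_fun setT bshift.
Proof. exact: (measurable_shZ 1). Qed.

Lemma measurable_iter_bshift j : measurable_fun setT (iter j bshift).
Proof.
elim: j => [|j ih] /=; first exact: measurable_id.
exact: measurableT_comp measurable_bshift ih.
Qed.

Section inst1.
Context (R : realType) (eta : {measure set IZ -> \bar R}) (j : nat).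
Let p0 : shift_push eta j set0 = 0%E.
Proof. by rewrite /shift_push /pushforward preimage_set0 measure0. Qed.
Let pge0 A : (0 <= shift_push eta j A)%E.
Proof. exact: (measure_ge0 eta). Qed.
Let psa : semi_sigma_additive (shift_push eta j).
Proof.
move=> F mF tF mUF; rewrite /shift_push /pushforward preimage_bigcup.
apply: measure_semi_sigma_additive.
- by move=> n; rewrite -[X in measurable X]setTI; exact: measurable_iter_bshift.
- apply/trivIsetP => /= i l _ _ il; rewrite -preimage_setI.
  by move/trivIsetP : tF => /(_ _ _ _ _ il) ->//; rewrite preimage_set0.
- by rewrite -preimage_bigcup -[X in measurable X]setTI; exact: measurable_iter_bshift.
Qed.
HB.instance Definition _ := isMeasure.Build _ _ _ (shift_push eta j) p0 pge0 psa.
End inst1.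

Lemma measurable_coordN (i : nat) (b : bool) : measurable [set a : IN | a i = b].
Proof. by apply: sub_sigma_algebra; exists i, b. Qed.



Section prefix.
Variable n : nat.
Definition pref (a : IN) : {ffun 'I_n -> bool} := [ffun i : 'I_n => a i].
Definition cyl (w : {ffun 'I_n -> bool}) : set IN :=
  [set a : IN | forall i : 'I_n, a i = w i].

Lemma measurable_cyl w : measurable (cyl w).
Proof.
have -> : cyl w = \big[setI/setT]_(i <- enum 'I_n) [set a : IN | a i = w i].
  apply/seteqP; split => a /=.
    by move=> h; rewrite -bigcap_seq /= => i _; exact: h.
  by rewrite -bigcap_seq /= => h i; apply: h; rewrite /= mem_enum.
apply: bigsetI_measurable => i _; apply: sub_sigma_algebra; exists (nat_of_ord i), (w i).
by [].
Qed.

Lemma pref_preimE (D : set {ffun 'I_n -> bool}) :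
  pref @^-1` D = \bigcup_(w in D) cyl w.
Proof.
apply/seteqP; split => a /=.
  by move=> Da; exists (pref a) => // i; rewrite ffunE.
by move=> [w Dw ha]; have -> : pref a = w by apply/ffunP => i; rewrite ffunE ha.
Qed.

Lemma measurable_pref (D : set {ffun 'I_n -> bool}) : measurable (pref @^-1` D).
Proof.
rewrite pref_preimE; apply: fin_bigcup_measurable; first exact: finite_finset.
by move=> w _; exact: measurable_cyl.
Qed.

Lemma cyl_triv (D : set {ffun 'I_n -> bool}) : trivIset D cyl.
Proof.
move=> w w' _ _ [a [ha ha']]; apply/ffunP => i.
by rewrite -ha -ha'.
Qed.

Lemma measure_pref (R : realType) (m : {measure set IN -> \bar R})
   (Hm : is_uniform_bernoulli m) (D : set {ffun 'I_n -> bool}) :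
  m (pref @^-1` D) = (\sum_(w \in D) (((2:R) ^- n)%:E))%E.
Proof.
rewrite pref_preimE measure_fin_bigcup //.
- by apply: eq_fsbigr => w _; exact: Hm.
- exact: finite_finset.
- exact: cyl_triv.
- by move=> w _; exact: measurable_cyl.
Qed.

Lemma measure_pref_bij (R : realType) (m : {measure set IN -> \bar R})
   (Hm : is_uniform_bernoulli m) (D : set {ffun 'I_n -> bool})
   (h : {ffun 'I_n -> bool} -> {ffun 'I_n -> bool}) (hK : involutive h) :
  m (pref @^-1` (h @^-1` D)) = m (pref @^-1` D).
Proof.
rewrite !measure_pref //.
have hD : h @` (h @^-1` D) = D.
  apply/seteqP; split => w /=.
    by move=> [w' Dw' <-].
  by move=> Dw; exists (h w) => //=; rewrite hK.
rewrite -[in RHS]hD fsbig_image //.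
by move=> x y _ _; exact: (can_inj hK).
Qed.
End prefix.

Definition ext n (w : {ffun 'I_n -> bool}) : IN :=
  fun j => if insub j is Some i then w i else false.
Arguments ext {n}.

Lemma ext_pref n a j : (j < n)%N -> ext (pref n a) j = a j.
Proof. by move=> jn; rewrite /ext insubT /= ffunE. Qed.

Definition det n (S : set IN) :=
  forall a b, (forall j, (j < n)%N -> a j = b j) -> S a -> S b.

Lemma det_pref n S : det n S -> S = pref n @^-1` (ext @^-1` S).
Proof.
move=> dS; apply/seteqP; split => a /=.
  by apply: dS => j jn; rewrite ext_pref.
by apply: dS => j jn; rewrite ext_pref.
Qed.

Lemma measurable_det n S : det n S -> measurable S.
Proof. by move=> /det_pref ->; exact: (measurable_pref n). Qed.

Lemma det_mono n n' S : (n <= n')%N -> det n S -> det n' S.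
Proof. by move=> nn dS a b h; apply: dS => j jn; apply: h; exact: leq_trans jn nn. Qed.

Lemma det_A_set r k : det k (A_set r k).
Proof.
move=> a b h; rewrite /A_set /= => <-; apply: eq_bigr => i _.
by rewrite h.
Qed.

Lemma measurable_A_set r k : measurable (A_set r k).
Proof. exact: measurable_det _ _ (det_A_set r k). Qed.

Definition flipN n (a : IN) : IN := fun j => if j == n.-1 then ~~ a j else a j.
Definition flipw n (w : {ffun 'I_n -> bool}) : {ffun 'I_n -> bool} :=
  [ffun i : 'I_n => if (i : nat) == n.-1 then ~~ w i else w i].

Lemma flipwK n : involutive (@flipw n).
Proof.
move=> w; apply/ffunP => i; rewrite /flipw !ffunE.
by case: (nat_of_ord i == n.-1) => //=; rewrite negbK.
Qed.

Lemma det_flip n S : det n S -> det n (flipN n @^-1` S).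
Proof.
move=> dS a b h; apply: dS => j jn; rewrite /flipN h //.
Qed.

Lemma measure_flip (R : realType) (m : {measure set IN -> \bar R})
   (Hm : is_uniform_bernoulli m) n S : det n S ->
  m (flipN n @^-1` S) = m S.
Proof.
move=> dS.
rewrite [in RHS](det_pref _ _ dS) (det_pref _ _ (det_flip _ _ dS)).
rewrite -(measure_pref_bij n _ m Hm (ext @^-1` S) (@flipw n) (@flipwK n)).
congr (m _); apply/seteqP; split => a /=.
  apply: dS => j jn; rewrite /flipN /ext insubT /= !ffunE.
  by case: ifP.
apply: dS => j jn; rewrite /flipN /ext insubT /= !ffunE.
by case: ifP.
Qed.
Section inst2.
Context (R : realType) (m : {finite_measure set IN -> \bar R}) (r k : nat).
Let mA := measurable_A_set r k.
Let p0 : restr_measure m (A_set r k) set0 = 0%E.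
Proof. by rewrite /restr_measure set0I measure0. Qed.
Let pge0 A : (0 <= restr_measure m (A_set r k) A)%E.
Proof. exact: (measure_ge0 m). Qed.
Let psa : semi_sigma_additive (restr_measure m (A_set r k)).
Proof. have := @measure_semi_sigma_additive _ _ _ (mrestr m mA). by []. Qed.
HB.instance Definition _ := isMeasure.Build _ _ _ (restr_measure m (A_set r k)) p0 pge0 psa.
Let fin : fin_num_fun (restr_measure m (A_set r k)).
Proof.
move=> A mAA; rewrite /restr_measure fin_num_measure//; exact: measurableI.
Qed.
HB.instance Definition _ := Measure_isFinite.Build _ _ _ (restr_measure m (A_set r k)) fin.
End inst2.

Section inst3.
Context (R : realType) (m : probability IN R) (k : nat) (eta : probability IZ R).
Definition Dseq (i : nat) : {measure set (IZ * IN) -> \bar R} :=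
  (shift_push eta i \x restr_measure m (A_set i k))%E.
Lemma DmE : D_meas m k eta = msum Dseq (2 ^ k).
Proof. by []. Qed.
End inst3.

Section rR.
Context (R : realType).
Definition rR n (a : IN) : R := \sum_(j < n) (a j : nat)%:R * 2 ^+ j.

Lemma rR_det n a b : (forall j, (j < n)%N -> a j = b j) -> rR n a = rR n b.
Proof. by move=> h; apply: eq_bigr => j _; rewrite h. Qed.

Lemma forall_recr (a : IN) n :
  [forall j : 'I_n.+1, a j] = [forall j : 'I_n, a j] && a n.
Proof.
apply/forallP/andP => [h|[/forallP h an] j].
  split; last by have := h ord_max.
  by apply/forallP => j; have := h (widen_ord (leqnSn n) j).
have : (j <= n)%N by rewrite -ltnS.
rewrite leq_eqVlt => /orP[/eqP ->//|jn].
by have := h (Ordinal jn).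
Qed.

Lemma rR_odo n a : rR n (odometer a) + (if [forall j : 'I_n, a j] then 2 ^+ n else 0)
  = rR n a + 1.
Proof.
elim: n => [|n ih].
  by rewrite /rR !big_ord0; have -> : [forall j : 'I_0, a j] by apply/forallP => -[].
rewrite /rR !big_ord_recr /= -/(rR n _) -/(rR n a) forall_recr.
have -> : odometer a n = if [forall j : 'I_n, a j] then ~~ a n else a n by [].
move: ih; case: [forall j : 'I_n, a j] => /= ih.
  case: (a n) => /=.
    rewrite mul0r addr0 exprS; lra.
  rewrite mul1r mul0r addr0; lra.
rewrite !addr0 in ih *; rewrite ih; lra.
Qed.

Lemma rR_flip n a : (0 < n)%N ->
  rR n (flipN n a) = rR n a + (if a n.-1 then - 2 ^+ n.-1 else 2 ^+ n.-1).
Proof.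
case: n => // n _ /=.
rewrite /rR !big_ord_recr /=.
rewrite (eq_bigr (fun j : 'I_n => (a j : nat)%:R * 2 ^+ j)); last first.
  by move=> j _; rewrite /flipN (ltn_eqF (ltn_ord j)).
rewrite /flipN eqxx.
case: (a n) => /=; rewrite ?mul0r ?mul1r; lra.
Qed.
End rR.

Section angles.
Context (R : realType) (n : nat).
Definition del : R := 2 * pi / (2 ^ n)%N%:R.
Definition tA (a : IN) : R := rR R n a * del.

Lemma pow2_neq0 : ((2 ^ n)%N%:R : R) != 0.
Proof. by rewrite pnatr_eq0 expn_eq0. Qed.

Lemma pow_del : 2 ^+ n * del = pi *+ 2.
Proof.
rewrite /del -natrX; have := pow2_neq0; move: ((2 ^ n)%N%:R) => N N0.
rewrite mulr2n; field.
by [].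
Qed.

Lemma tA_odo a : cos (tA (odometer a)) = cos (tA a + del) /\
                 sin (tA (odometer a)) = sin (tA a + del).
Proof.
have h := rR_odo R n a.
have e : tA (odometer a) = tA a + del - (if [forall j : 'I_n, a j] then pi *+ 2 else 0).
  rewrite /tA.
  have -> : rR R n (odometer a) = rR R n a + 1 - (if [forall j : 'I_n, a j] then 2 ^+ n else 0).
    by rewrite -h addrK.
  case: [forall j : 'I_n, a j]; last by rewrite !subr0 mulrDl mul1r.
  by rewrite mulrBl mulrDl mul1r pow_del.
rewrite e; case: [forall j : 'I_n, a j]; last by rewrite subr0.
by split; [rewrite -[LHS]cosD2pi | rewrite -[LHS]sinD2pi]; rewrite subrK.
Qed.

Lemma tA_flip a : (0 < n)%N ->
  cos (tA (flipN n a)) = - cos (tA a) /\ sin (tA (flipN n a)) = - sin (tA a).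
Proof.
move=> n0.
have hp : 2 ^+ n.-1 * del = pi.
  rewrite /del; case: n n0 => // n' _ /=.
  rewrite expnS natrM natrX.
  have : (2 ^+ n' : R) != 0 by rewrite expf_neq0 // pnatr_eq0.
  move: (2 ^+ n' : R) => N N0.
  by field.
rewrite /tA rR_flip // mulrDl.
case: (a n.-1).
  rewrite mulNr hp.
  split.
    by rewrite -[in RHS](subrK pi (rR R n a * del)) cosDpi opprK.
  by rewrite -[in RHS](subrK pi (rR R n a * del)) sinDpi opprK.
by rewrite hp cosDpi sinDpi.
Qed.
End angles.

Lemma measurable_const_set d (X : measurableType d) (P : Prop) :
  measurable ([set _ : X | P]).
Proof.
case: (pselect P) => p.
  by have -> : [set _ : X | P] = setT by apply/seteqP; split.
by have -> : [set _ : X | P] = set0 by apply/seteqP; split.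
Qed.

Lemma measurable_coordR (R : realType) (j : nat) :
  measurable_fun setT (fun a : IN => ((a j : nat)%:R : R)).
Proof.
move=> _ Y _; rewrite setTI.
have -> : (fun a : IN => ((a j : nat)%:R : R)) @^-1` Y =
   ([set a : IN | a j = true] `&` [set _ | Y 1]) `|`
   ([set a : IN | a j = false] `&` [set _ | Y 0]).
  apply/seteqP; split => a /=.
    by case: (a j) => /= h; [left|right].
  by case=> -[->].
by apply: measurableU; apply: measurableI;
  [exact: measurable_coordN|exact: measurable_const_set|
   exact: measurable_coordN|exact: measurable_const_set].
Qed.

Lemma measurable_rR (R : realType) n : measurable_fun setT (rR R n).
Proof.
rewrite /rR; apply: measurable_sum => j.
apply: measurable_realfun.measurable_funM; first exact: measurable_coordR.
exact: measurable_cst.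
Qed.

Lemma measurable_tA (R : realType) n : measurable_fun setT (tA R n).
Proof.
rewrite /tA; apply: measurable_realfun.measurable_funM; first exact: measurable_rR.
exact: measurable_cst.
Qed.

Lemma shZ_comp a b x : shZ a (shZ b x) = shZ (a + b) x.
Proof. by apply/funext => i; rewrite /shZ addrA. Qed.

Lemma shZ0 x : shZ 0 x = x.
Proof. by apply/funext => i; rewrite /shZ addr0. Qed.

Lemma bshiftE x : bshift x = shZ 1 x.
Proof. by []. Qed.

Lemma measurable_preshZ j B : measurable B -> measurable (shZ j @^-1` B).
Proof. by move=> mB; rewrite -[X in measurable X]setTI; exact: measurable_shZ. Qed.

Definition TN : set IN := setT.
Lemma mTN : measurable TN. Proof. exact: measurableT. Qed.
#[local] Hint Resolve mTN : core.

Section main.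
Context (R : realType) (m : probability IN R) (Hm : is_uniform_bernoulli m)
  (k : nat) (eta : probability IZ R)
  (Herg : ergodic (msum (Dseq R m k eta) (2 ^ k)) SxO)
  (n : nat) (kn : (k < n)%N).
Local Notation Dm := (msum (Dseq R m k eta) (2 ^ k)).

Lemma SxO_preX B : SxO @^-1` (B `*` TN) = (bshift @^-1` B) `*` TN.
Proof. by apply/seteqP; split => -[x a]. Qed.

Lemma Dinv1 B : measurable B -> Dm (bshift @^-1` B `*` TN) = Dm (B `*` TN).
Proof.
move=> mB; rewrite -SxO_preX; apply: Herg.1.
by apply: measurableX.
Qed.

Lemma DinvZ j B : measurable B -> Dm (shZ j @^-1` B `*` TN) = Dm (B `*` TN).
Proof.
have pos p B' : measurable B' -> Dm (shZ (Posz p) @^-1` B' `*` TN) = Dm (B' `*` TN).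
  elim: p B' => [|p ih] B' mB'.
    by have -> : shZ (Posz 0) @^-1` B' = B' by apply/seteqP; split => x /=; rewrite shZ0.
  have -> : shZ (Posz p.+1) @^-1` B' = bshift @^-1` (shZ (Posz p) @^-1` B').
    have e : Posz p + 1 = Posz p.+1 by rewrite -[in RHS]addn1 PoszD.
    by apply/seteqP; split => x /=; rewrite bshiftE shZ_comp e.
  by rewrite Dinv1 ?ih //; exact: measurable_preshZ.
move=> mB; case: j => p; first exact: pos.
set C := shZ (Negz p) @^-1` B.
have mC : measurable C by exact: measurable_preshZ.
rewrite -(pos p.+1 C mC).
congr (Dm (_ `*` _)); apply/seteqP; split => x /=;
  by rewrite /C /= shZ_comp NegzE addNr shZ0.
Qed.

Variables (u v : IZ -> R).
Hypotheses (mu : measurable_fun setT u) (mv : measurable_fun setT v).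
Let c := cos (del R n).
Let s := sin (del R n).
Definition eigeq x := u (bshift x) = c * u x - s * v x /\ v (bshift x) = s * u x + c * v x.
Variable N0 : set IZ.
Hypotheses (mN0 : measurable N0) (N00 : Dm (N0 `*` TN) = 0%E)
  (subN : forall x, ~ eigeq x -> N0 x).

Definition G := [set x | forall j : int, ~ N0 (shZ j x)].

Lemma GE : G = \bigcap_p (shZ (Posz p) @^-1` (~` N0) `&` shZ (Negz p) @^-1` (~` N0)).
Proof.
apply/seteqP; split => x /=.
  by move=> h p _; split; apply: h.
by move=> h; case=> p; have [] := h p I.
Qed.

Lemma measurable_G : measurable G.
Proof.
rewrite GE; apply: bigcapT_measurable => p.
by apply: measurableI; apply: measurable_preshZ; exact: measurableC.
Qed.

Lemma nullG : Dm (~` G `*` TN) = 0%E.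
Proof.
apply/eqP; rewrite eq_le measure_ge0 andbT.
pose F p := (shZ (Posz p) @^-1` N0 `|` shZ (Negz p) @^-1` N0) `*` TN.
have mF p : measurable (F p).
  by apply: measurableX => //; apply: measurableU; exact: measurable_preshZ.
apply: (le_trans (measure_sigma_subadditive _ mF _ _)).
- apply: measurableX => //; apply: measurableC; exact: measurable_G.
- move=> [x a] [/= Gx _].
  have [j Nj] : exists j : int, N0 (shZ j x).
    by apply: contrapT => h; apply: Gx => j Nj; apply: h; exists j.
  case: j Nj => p Nj; exists p => //; split => //; [by left | by right].
rewrite eseries0 // => p _ _.
apply/eqP; rewrite eq_le measure_ge0 andbT.
have -> : F p = (shZ (Posz p) @^-1` N0 `*` TN) `|` (shZ (Negz p) @^-1` N0 `*` TN).
  apply/seteqP; split => -[x a] /=.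
    by case=> -[h|h] _; [left|right].
  by case=> -[h _]; split => //; [left|right].
apply: (le_trans (measureU2 _ _ _)).
- by apply: measurableX => //; exact: measurable_preshZ.
- by apply: measurableX => //; exact: measurable_preshZ.
by rewrite /= !DinvZ // N00 adde0.
Qed.

Lemma G_eqn x : G x -> eigeq x.
Proof.
move=> Gx; apply: contrapT => h; apply: (Gx 0); rewrite shZ0; exact: subN.
Qed.

Lemma G_bshift x : G (bshift x) <-> G x.
Proof.
split => h j.
  by have := h (j - 1); rewrite bshiftE shZ_comp subrK.
by rewrite bshiftE shZ_comp; apply: h.
Qed.

Section phi.
Variable phi : IZ -> IN -> R.
Hypotheses (mphi : measurable_fun setT (fun z : IZ * IN => phi z.1 z.2))
  (inv : forall x a, eigeq x -> phi (bshift x) (odometer a) = phi x a)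
  (anti : forall x a, phi x (flipN n a) = - phi x a)
  (detp : forall x a b, (forall j, (j < n)%N -> a j = b j) -> phi x a = phi x b).

Definition Ep := [set z : IZ * IN | G z.1 /\ 0 < phi z.1 z.2].
Definition En := [set z : IZ * IN | G z.1 /\ phi z.1 z.2 < 0].

Lemma measurable_Ep : measurable Ep.
Proof.
have := mphi measurableT _ (measurable_itv `]0, +oo[); rewrite setTI => h.
have -> : Ep = (G `*` TN) `&` ((fun z : IZ * IN => phi z.1 z.2) @^-1` `]0, +oo[%classic).
  apply/seteqP; split => -[x a] /=.
    move=> [Gx hp]; split; first by split.
    by rewrite /= in_itv /= andbT.
  by move=> [[Gx _]]; rewrite /= in_itv /= andbT => hp; split.
apply: measurableI => //; apply: measurableX => //; exact: measurable_G.
Qed.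

Lemma measurable_En : measurable En.
Proof.
have := mphi measurableT _ (measurable_itv `]-oo, 0[); rewrite setTI => h.
have -> : En = (G `*` TN) `&` ((fun z : IZ * IN => phi z.1 z.2) @^-1` `]-oo, 0[%classic).
  apply/seteqP; split => -[x a] /=.
    move=> [Gx hp]; split; first by split.
    by rewrite /= in_itv /=.
  by move=> [[Gx _]]; rewrite /= in_itv /= => hp; split.
apply: measurableI => //; apply: measurableX => //; exact: measurable_G.
Qed.

Lemma inv_Ep : SxO @^-1` Ep = Ep.
Proof.
apply/seteqP; split => -[x a] /=; rewrite /SxO /=.
  move=> [Gbx h]; have Gx := (G_bshift x).1 Gbx; split => //.
  by rewrite -inv //; exact: G_eqn.
move=> [Gx h]; split; first exact: (G_bshift x).2.
by rewrite inv //; exact: G_eqn.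
Qed.

Lemma inv_En : SxO @^-1` En = En.
Proof.
apply/seteqP; split => -[x a] /=; rewrite /SxO /=.
  move=> [Gbx h]; have Gx := (G_bshift x).1 Gbx; split => //.
  by rewrite -inv //; exact: G_eqn.
move=> [Gx h]; split; first exact: (G_bshift x).2.
by rewrite inv //; exact: G_eqn.
Qed.

Lemma sec_eq : Dm Ep = Dm En.
Proof.
rewrite /msum; apply: eq_bigr => i _.
rewrite /Dseq /= /product_measure1; apply: eq_integral => x _ /=.
rewrite /restr_measure.
have dS : det n (xsection Ep x `&` A_set i k).
  move=> a b h; rewrite /xsection /= !inE /= => -[[Gx pa] Aa]; split.
    by split => //; rewrite -(detp _ _ _ h).
  by apply: (det_mono _ _ _ (ltnW kn) (det_A_set i k)) Aa.
rewrite -(measure_flip _ _ Hm _ _ dS); congr (m _).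
apply/seteqP; split => a /=; rewrite /xsection /= !inE /=.
- move=> [[Gx pa] Aa]; split; first by split => //; rewrite -oppr_gt0 -anti.
  apply: (det_A_set i k) Aa => j jk; rewrite /flipN.
  by have -> : (j == n.-1) = false by apply/negbTE; rewrite neq_ltn; apply/orP; left; rewrite -ltnS prednK ?(leq_ltn_trans _ kn) // (leq_trans jk).
- move=> [[Gx pa] Aa]; split; first by split => //; rewrite anti oppr_gt0.
  apply: (det_A_set i k) Aa => j jk; rewrite /flipN.
  by have -> : (j == n.-1) = false by apply/negbTE; rewrite neq_ltn; apply/orP; left; rewrite -ltnS prednK ?(leq_ltn_trans _ kn) // (leq_trans jk).
Qed.

Lemma null_EpEn : Dm Ep = 0%E /\ Dm En = 0%E.
Proof.
suff h : Dm Ep = 0%E by split => //; rewrite -sec_eq.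
have [//|h] := Herg.2 Ep measurable_Ep inv_Ep.
rewrite sec_eq; apply/eqP; rewrite eq_le measure_ge0 andbT.
rewrite -h; apply: le_measure; rewrite ?inE.
- exact: measurable_En.
- by apply: measurableC; exact: measurable_Ep.
by move=> z [Gz hz] [_ hz']; have := lt_trans hz hz'; rewrite ltxx.
Qed.
End phi.

Definition Phi1 x a := u x * cos (tA R n a) + v x * sin (tA R n a).
Definition Phi2 x a := v x * cos (tA R n a) - u x * sin (tA R n a).

Lemma tA_det a b : (forall j, (j < n)%N -> a j = b j) -> tA R n a = tA R n b.
Proof. by move=> h; rewrite /tA (rR_det _ _ _ _ h). Qed.

Lemma mcos : measurable_fun setT (fun z : IZ * IN => cos (tA R n z.2)).
Proof.
have h1 : measurable_fun setT (fun z : IZ * IN => tA R n z.2).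
  exact: (measurableT_comp (measurable_tA R n) measurable_snd).
exact: (measurableT_comp (measurable_realfun.continuous_measurable_fun (@continuous_cos R)) h1).
Qed.

Lemma msin : measurable_fun setT (fun z : IZ * IN => sin (tA R n z.2)).
Proof.
have h1 : measurable_fun setT (fun z : IZ * IN => tA R n z.2).
  exact: (measurableT_comp (measurable_tA R n) measurable_snd).
exact: (measurableT_comp (measurable_realfun.continuous_measurable_fun (@continuous_sin R)) h1).
Qed.

Lemma mu1 : measurable_fun setT (fun z : IZ * IN => u z.1).
Proof. by apply: measurableT_comp => //; exact: measurable_fst. Qed.
Lemma mv1 : measurable_fun setT (fun z : IZ * IN => v z.1).
Proof. by apply: measurableT_comp => //; exact: measurable_fst. Qed.

Lemma mPhi1 : measurable_fun setT (fun z : IZ * IN => Phi1 z.1 z.2).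
Proof.
apply: measurable_realfun.measurable_funD; apply: measurable_realfun.measurable_funM.
- exact: mu1.
- exact: mcos.
- exact: mv1.
- exact: msin.
Qed.

Lemma mPhi2 : measurable_fun setT (fun z : IZ * IN => Phi2 z.1 z.2).
Proof.
apply: measurable_realfun.measurable_funB; apply: measurable_realfun.measurable_funM.
- exact: mv1.
- exact: mcos.
- exact: mu1.
- exact: msin.
Qed.

Lemma inv_Phi1 x a : eigeq x -> Phi1 (bshift x) (odometer a) = Phi1 x a.
Proof.
move=> [e1 e2]; rewrite /Phi1 e1 e2; have [-> ->] := tA_odo R n a.
rewrite cosD sinD; have h := cos2Dsin2 (del R n); rewrite /c /s.
set C := cos (tA R n a); set S := sin (tA R n a).
set cc := cos (del R n) in h *; set ss := sin (del R n) in h *.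
transitivity ((u x * C + v x * S) * (cc ^+ 2 + ss ^+ 2)); first ring.
by rewrite h mulr1.
Qed.

Lemma inv_Phi2 x a : eigeq x -> Phi2 (bshift x) (odometer a) = Phi2 x a.
Proof.
move=> [e1 e2]; rewrite /Phi2 e1 e2; have [-> ->] := tA_odo R n a.
rewrite cosD sinD; have h := cos2Dsin2 (del R n); rewrite /c /s.
set C := cos (tA R n a); set S := sin (tA R n a).
set cc := cos (del R n) in h *; set ss := sin (del R n) in h *.
transitivity ((v x * C - u x * S) * (cc ^+ 2 + ss ^+ 2)); first ring.
by rewrite h mulr1.
Qed.

Lemma n_gt0 : (0 < n)%N.
Proof. exact: leq_ltn_trans (leq0n k) kn. Qed.

Lemma anti_Phi1 x a : Phi1 x (flipN n a) = - Phi1 x a.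
Proof. by rewrite /Phi1; have [-> ->] := tA_flip R n a n_gt0; ring. Qed.

Lemma anti_Phi2 x a : Phi2 x (flipN n a) = - Phi2 x a.
Proof. by rewrite /Phi2; have [-> ->] := tA_flip R n a n_gt0; ring. Qed.

Lemma det_Phi1 x a b : (forall j, (j < n)%N -> a j = b j) -> Phi1 x a = Phi1 x b.
Proof. by move=> h; rewrite /Phi1 (tA_det _ _ h). Qed.

Lemma det_Phi2 x a b : (forall j, (j < n)%N -> a j = b j) -> Phi2 x a = Phi2 x b.
Proof. by move=> h; rewrite /Phi2 (tA_det _ _ h). Qed.

Definition Nbad := ~` G `|` (G `&` ~` [set x | u x = 0 /\ v x = 0]).

Lemma measurable_Nbad : measurable Nbad.
Proof.
have mu0 := mu measurableT _ (measurable_set1 0); rewrite setTI in mu0.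
have mv0 := mv measurableT _ (measurable_set1 0); rewrite setTI in mv0.
rewrite /Nbad; have -> : [set x | u x = 0 /\ v x = 0] = u @^-1` [set 0] `&` v @^-1` [set 0] by [].
apply: measurableU; first by apply: measurableC; exact: measurable_G.
apply: measurableI; first exact: measurable_G.
by apply: measurableC; exact: measurableI.
Qed.

Lemma null_Nbad : Dm (Nbad `*` TN) = 0%E.
Proof.
have [h1 h2] := null_EpEn _ mPhi1 inv_Phi1 anti_Phi1 det_Phi1.
have [h3 h4] := null_EpEn _ mPhi2 inv_Phi2 anti_Phi2 det_Phi2.
have mG := measurable_G.
have m1 := measurable_Ep _ mPhi1; have m2 := measurable_En _ mPhi1.
have m3 := measurable_Ep _ mPhi2; have m4 := measurable_En _ mPhi2.
have mGc : measurable (~` G `*` TN) by apply: measurableX => //; exact: measurableC.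
apply/eqP; rewrite eq_le measure_ge0 andbT.
apply: (le_trans (le_measure _ (x := Nbad `*` TN)
   (y := (~` G `*` TN) `|` ((Ep Phi1 `|` En Phi1) `|` (Ep Phi2 `|` En Phi2))) _ _ _)).
- by rewrite inE; apply: measurableX => //; exact: measurable_Nbad.
- by rewrite inE; repeat apply: measurableU.
- move=> [x a] [/= [nG|[Gx nz]] _]; first by left.
  right.
  have [e1|ne1] := eqVneq (Phi1 x a) 0; last first.
    by left; case: (ltgtP (Phi1 x a) 0) ne1 => // h _; [right|left].
  have [e2|ne2] := eqVneq (Phi2 x a) 0; last first.
    by right; case: (ltgtP (Phi2 x a) 0) ne2 => // h _; [right|left].
  exfalso; apply: nz.
  have hs : u x ^+ 2 + v x ^+ 2 = 0.
    have := cos2Dsin2 (tA R n a).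
    move: e1 e2; rewrite /Phi1 /Phi2.
    set C := cos (tA R n a); set S := sin (tA R n a) => e1 e2 hcs.
    transitivity ((u x * C + v x * S) ^+ 2 + (v x * C - u x * S) ^+ 2).
      by rewrite -[LHS]mulr1 -hcs; ring.
    by rewrite e1 e2; ring.
  move/eqP: hs; rewrite paddr_eq0 ?sqr_ge0 // !sqrf_eq0 => /andP[/eqP hu /eqP hv].
  by split.
apply: (le_trans (measureU2 _ _ _)) => //.
  by repeat apply: measurableU.
rewrite /= nullG add0e.
apply: (le_trans (measureU2 _ _ _)) => //; first by apply: measurableU.
  by apply: measurableU.
apply: (le_trans (leeD (measureU2 _ _ _) (measureU2 _ _ _))) => //.
by rewrite /= h1 h2 h3 h4 !adde0.
Qed.
End main.

Theorem lemma8 (R : realType) (m : probability IN R)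
  (Hm : is_uniform_bernoulli m) (k : nat) (eta : probability IZ R)
  (Hinv : forall A : set IZ, measurable A ->
     eta (preimage (iter (2 ^ k)%N bshift) A) = eta A)
  (Herg : ergodic (D_meas m k eta) SxO) :
  forall n : nat, (k < n)%N ->
    ~ L2_eigenvalue (theta0 (D_meas m k eta)) bshift
        (cos (2 * pi / (2 ^ n)%N%:R)) (sin (2 * pi / (2 ^ n)%N%:R)).
Proof.
move=> n kn [u [v [mu mv _ nz ae]]].
have Herg' : ergodic (msum (Dseq R m k eta) (2 ^ k)) SxO := Herg.
case: ae => N0 [mN0 N00 subN].
have fstE (B : set IZ) : fst @^-1` B = B `*` TN :> set (IZ * IN).
  by apply/seteqP; split => -[x a] /=; [move=> hb; split | case].
have N00' : msum (Dseq R m k eta) (2 ^ k) (N0 `*` TN) = 0%E.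
  by rewrite -fstE; exact: N00.
have subN' : forall x, ~ eigeq R n u v x -> N0 x.
  by move=> x h; apply: subN.
have h := null_Nbad R m Hm k eta Herg' n kn u v mu mv N0 mN0 N00' subN'.
apply: nz; exists (Nbad R u v N0); split.
- exact: measurable_Nbad.
- by rewrite /theta0 /pushforward fstE; exact: h.
- move=> x /= hx; rewrite /Nbad.
  case: (pselect (G N0 x)) => Gx; last by left.
  by right; split.
Qed.
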